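(* Let $A$ be an Artin algebra, $k\ge1$ an integer and $\mathcal C_1,\dots,\mathcal C_k$ subcategories of $A\text{-mod}$. Then $$\max\{\operatorname{ed}\mathcal C_i\mid 1\le i\le k\}\le\operatorname{ed}(\mathcal C_1\bullet\mathcal C_2\bullet\cdots\bullet\mathcal C_k)\le\sum_{i=1}^k\operatorname{ed}\mathcal C_i+k-1.$$
   Context: Subcategories are full, additive and closed under isomorphisms. For subcategories $\mathcal T_1,\mathcal T_2$, $\mathcal T_1\bullet\mathcal T_2:=\operatorname{add}\{X\mid\exists$ exact $0\to T_1\to X\to T_2\to0$, $T_i\in\mathcal T_i\}$ ($\operatorname{add}$ = closure under finite direct sums and direct summands); $\bullet$ is associative. For a module $T$: $[T]_0=\{0\}$, $[T]_1=\operatorname{add}(T)$, $[T]_n=[T]_1\bullet[T]_{n-1}$. $\operatorname{ed}\mathcal C=\inf\{n\ge0\mid\mathcal C\subseteq[T]_{n+1}$ for some $T\in A\text{-mod}\}$. *)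

(* Defs.v *)
From HB Require Import structures.
From mathcomp Require Import all_boot all_order all_algebra.
From mathcomp Require Import boolp.
Set Implicit Arguments. Unset Strict Implicit. Unset Printing Implicit Defensive.
Import Order.TTheory GRing.Theory.
Local Open Scope ring_scope.

Definition is_ideal (R : comNzRingType) (I : R -> Prop) : Prop :=
  [/\ I 0, (forall x y, I x -> I y -> I (x + y)) & (forall r x, I x -> I (r * x))].

Definition artinian (R : comNzRingType) : Prop :=
  forall I : nat -> R -> Prop,
    (forall n, is_ideal (I n)) ->
    (forall n x, I n.+1 x -> I n x) ->
    exists N, forall n, (N <= n)%N -> forall x, I n x <-> I N x.

Definition fin_gen (K : pzRingType) (M : lmodType K) : Prop :=
  exists s : seq M, forall x : M,
    exists c : 'I_(size s) -> K, x = \sum_(i < size s) c i *: s`_i.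

(* An Artin algebra is given by R : comNzRingType with [artinian R] and
   A : algType R with [fin_gen A] (A finitely generated as an R-module). *)

Record fgmod (A : nzRingType) := FGMod {
  mcar :> lmodType A;
  mfg : fin_gen mcar }.

Section Modules.
Variable A : nzRingType.

Definition lin (M N : lmodType A) (f : M -> N) : Prop :=
  forall (a : A) (x y : M), f (a *: x + y) = a *: f x + f y.

Definition is_zero_mod (X : fgmod A) : Prop := forall x : X, x = 0.

Definition mod_iso (X Y : fgmod A) : Prop :=
  exists (f : X -> Y) (g : Y -> X),
    [/\ lin f, lin g, (forall x, g (f x) = x) & (forall y, f (g y) = y)].

Definition summand (Y X : fgmod A) : Prop :=
  exists (i : Y -> X) (p : X -> Y), [/\ lin i, lin p & forall y, p (i y) = y].

Definition biprod (X Y Z : fgmod A) : Prop :=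
  exists (i1 : Y -> X) (i2 : Z -> X) (p1 : X -> Y) (p2 : X -> Z),
    [/\ lin i1, lin i2, lin p1, lin p2 &
    [/\ (forall y, p1 (i1 y) = y), (forall z, p2 (i2 z) = z),
        (forall z, p1 (i2 z) = 0), (forall y, p2 (i1 y) = 0) &
        (forall x, i1 (p1 x) + i2 (p2 x) = x)]].

Definition short_exact (T1 X T2 : fgmod A) : Prop :=
  exists (f : T1 -> X) (g : X -> T2),
    [/\ lin f, lin g, injective f, (forall t, exists x, g x = t) &
        (forall x, g x = 0 <-> exists t, f t = x)].

Definition cls := fgmod A -> Prop.

Inductive fsum (S : cls) : cls :=
| fsum0 X : is_zero_mod X -> fsum S X
| fsumS X Y Z : S Y -> fsum S Z -> biprod X Y Z -> fsum S X.

Definition add (S : cls) : cls := fun X => exists Y, fsum S Y /\ summand X Y.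

Definition subcategory (C : cls) : Prop :=
  [/\ (forall X Y, mod_iso X Y -> C X -> C Y),
      (exists X, is_zero_mod X /\ C X),
      (forall X Y Z, C Y -> C Z -> biprod X Y Z -> C X) &
      (forall X Y, summand X Y -> C Y -> C X)].

Definition bullet (T1 T2 : cls) : cls :=
  add (fun X => exists Y Z, [/\ T1 Y, T2 Z & short_exact Y X Z]).

Fixpoint brack (T : fgmod A) (n : nat) : cls :=
  match n with
  | 0 => is_zero_mod
  | 1 => add (fun X => mod_iso X T)
  | n'.+1 => bullet (add (fun X => mod_iso X T)) (brack T n')
  end.

(* C1 • C2 • ... • C(n+1) for C : nat -> cls (indices 0..n) *)
Fixpoint bullets (C : nat -> cls) (n : nat) : cls :=
  match n with
  | 0 => C 0%N
  | n'.+1 => bullet (bullets C n') (C n)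
  end.

(** extended naturals nat ∪ {oo} as option nat (None = oo) *)
Definition ed_pred (C : cls) (n : nat) : bool :=
  `[< exists T : fgmod A, forall X, C X -> brack T n.+1 X >].

Definition ed (C : cls) : option nat :=
  match pselect (exists n, ed_pred C n) with
  | left h => Some (ex_minn h)
  | right _ => None
  end.

End Modules.

Definition oleq (x y : option nat) : Prop :=
  match x, y with
  | _, None => True
  | None, Some _ => False
  | Some a, Some b => (a <= b)%N
  end.

Definition oadd (x y : option nat) : option nat :=
  match x, y with
  | Some a, Some b => Some (a + b)%N
  | _, _ => None
  end.

(* Main.v *)
Require Import Defs.
From mathcomp Require Import all_boot all_order all_algebra.
From HB Require Import structures.
From mathcomp Require Import boolp.
Set Implicit Arguments. Unset Strict Implicit. Unset Printing Implicit Defensive.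
Import GRing.Theory.
Open Scope ring_scope.

Record submod (A : nzRingType) (X : lmodType A) := Submod {
  sP :> X -> Prop;
  s0 : sP 0;
  sD : forall x y, sP x -> sP y -> sP (x + y);
  sZ : forall a x, sP x -> sP (a *: x) }.

Section QuotDefs.
Variables (A : nzRingType) (X : lmodType A) (S : submod X).

Lemma sN x : S x -> S (- x).
Proof. by move=> h; rewrite -scaleN1r; apply: sZ. Qed.
Lemma sB x y : S x -> S y -> S (x - y).
Proof. by move=> hx hy; apply: sD => //; apply: sN. Qed.

Lemma ex_qrep (x : X) : exists y, `[< S (x - y) >].
Proof. by exists x; apply/asboolP; rewrite subrr; apply: s0. Qed.

Definition qrep (x : X) : X := xchoose (ex_qrep x).

Lemma qrepP x : S (x - qrep x).
Proof. exact: (asboolP _ (xchooseP (ex_qrep x))). Qed.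

Lemma qrep_eq x y : S (x - y) -> qrep x = qrep y.
Proof.
move=> h; apply: eq_xchoose => z; apply/asboolP/asboolP => h2.
  have -> : y - z = (x - z) - (x - y) by rewrite opprB [RHS]addrC subrKA.
  by apply: sB.
have -> : x - z = (x - y) + (y - z) by rewrite subrKA.
by apply: sD.
Qed.

Lemma qrep_eqP x y : qrep x = qrep y <-> S (x - y).
Proof.
split; last exact: qrep_eq.
move=> e; have h1 := qrepP x; have h2 := qrepP y.
have -> : x - y = (x - qrep x) - (y - qrep y) by rewrite e opprB subrKA.
by apply: sB.
Qed.

Lemma qrep_idem x : qrep (qrep x) = qrep x.
Proof. apply: qrep_eq; rewrite -opprB; apply: sN; apply: qrepP. Qed.

Definition quot := {x : X | qrep x == x}.
HB.instance Definition _ := Choice.on quot.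

Definition mkq (x : X) : quot := exist _ (qrep x) (introT eqP (qrep_idem x)).

Lemma mkq_eq x y : mkq x = mkq y <-> S (x - y).
Proof.
split => [e|h]; first by apply/qrep_eqP; exact: (congr1 val e).
by apply: val_inj => /=; apply/qrep_eqP.
Qed.

Lemma qvalK (q : quot) : mkq (val q) = q.
Proof. by apply: val_inj => /=; apply/eqP; exact: (valP q). Qed.

Lemma quotW (Pr : quot -> Prop) : (forall x, Pr (mkq x)) -> forall q, Pr q.
Proof. by move=> h q; rewrite -(qvalK q). Qed.

Lemma val_mkq x : S (val (mkq x) - x).
Proof. by rewrite /= -opprB; apply: sN; apply: qrepP. Qed.

Definition qadd (a b : quot) := mkq (val a + val b).
Definition qopp (a : quot) := mkq (- val a).
Definition qzero := mkq 0.
Definition qscale (r : A) (a : quot) := mkq (r *: val a).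

Lemma qaddE x y : qadd (mkq x) (mkq y) = mkq (x + y).
Proof.
apply/mkq_eq; rewrite opprD addrACA; apply: sD; exact: val_mkq.
Qed.
Lemma qoppE x : qopp (mkq x) = mkq (- x).
Proof. apply/mkq_eq; rewrite -opprD; apply: sN; exact: val_mkq. Qed.
Lemma qscaleE r x : qscale r (mkq x) = mkq (r *: x).
Proof. apply/mkq_eq; rewrite -scalerBr; apply: sZ; exact: val_mkq. Qed.

Fact qaddA : associative qadd.
Proof.
by elim/quotW => x; elim/quotW => y; elim/quotW => z; rewrite !qaddE addrA.
Qed.
Fact qaddC : commutative qadd.
Proof. by elim/quotW => x; elim/quotW => y; rewrite !qaddE addrC. Qed.
Fact qadd0 : left_id qzero qadd.
Proof. by elim/quotW => x; rewrite qaddE add0r. Qed.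
Fact qaddN : left_inverse qzero qopp qadd.
Proof. by elim/quotW => x; rewrite qoppE qaddE addNr. Qed.

HB.instance Definition _ := GRing.isZmodule.Build quot qaddA qaddC qadd0 qaddN.

Fact qscaleA a b v : qscale a (qscale b v) = qscale (a * b) v.
Proof. by elim/quotW: v => x; rewrite !qscaleE scalerA. Qed.
Fact qscale1 : left_id 1 qscale.
Proof. by elim/quotW => x; rewrite qscaleE scale1r. Qed.
Fact qscaleDr : right_distributive qscale +%R.
Proof.
move=> a; elim/quotW => x; elim/quotW => y.
by rewrite /GRing.add /= qaddE !qscaleE qaddE scalerDr.
Qed.
Fact qscaleDl v : {morph qscale^~ v: a b / a + b}.
Proof.
elim/quotW: v => x a b.
by rewrite /GRing.add /= !qscaleE qaddE scalerDl.
Qed.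

HB.instance Definition _ := GRing.Zmodule_isLmodule.Build A quot qscaleA qscale1 qscaleDr qscaleDl.

Lemma mkqD x y : mkq x + mkq y = mkq (x + y) :> quot.
Proof. exact: qaddE. Qed.
Lemma mkqZ r x : r *: mkq x = mkq (r *: x) :> quot.
Proof. exact: qscaleE. Qed.
Lemma mkq0 : mkq 0 = 0 :> quot.
Proof. by []. Qed.
Lemma mkq_lin : lin (mkq : X -> quot).
Proof. by move=> a x y; rewrite mkqZ mkqD. Qed.
Lemma mkq_eq0 x : mkq x = 0 <-> S x.
Proof. by rewrite -mkq0 mkq_eq subr0. Qed.

End QuotDefs.

Section Lin.
Variable A : nzRingType.
Implicit Types M N P : lmodType A.

Lemma linD M N (f : M -> N) : lin f -> forall x y, f (x + y) = f x + f y.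
Proof. by move=> h x y; rewrite -[x in LHS]scale1r h scale1r. Qed.
Lemma lin0 M N (f : M -> N) : lin f -> f 0 = 0.
Proof.
move=> h; have e := linD h 0 0; rewrite addr0 in e.
by have := congr1 (fun v => v - f 0) e; rewrite addrK subrr => <-.
Qed.
Lemma linZ M N (f : M -> N) : lin f -> forall a x, f (a *: x) = a *: f x.
Proof. by move=> h a x; rewrite -[a *: x]addr0 h (lin0 h) addr0. Qed.
Lemma linN M N (f : M -> N) : lin f -> forall x, f (- x) = - f x.
Proof. by move=> h x; rewrite -scaleN1r (linZ h) scaleN1r. Qed.
Lemma linB M N (f : M -> N) : lin f -> forall x y, f (x - y) = f x - f y.
Proof. by move=> h x y; rewrite (linD h) (linN h). Qed.
Lemma lin_sum M N (f : M -> N) (h : lin f) (I : Type) (r : seq I) (Pr : pred I) (F : I -> M) :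
  f (\sum_(i <- r | Pr i) F i) = \sum_(i <- r | Pr i) f (F i).
Proof. exact: (big_morph f (linD h) (lin0 h)). Qed.
Lemma lin_id M : lin (@id M).
Proof. by []. Qed.
Lemma lin_comp M N P (f : M -> N) (g : N -> P) : lin f -> lin g -> lin (g \o f).
Proof. by move=> hf hg a x y; rewrite /= hf hg. Qed.
Lemma lin_cst0 M N : lin (fun _ : M => 0 : N).
Proof. by move=> a x y; rewrite scaler0 addr0. Qed.
Lemma lin_add M N (f g : M -> N) : lin f -> lin g -> lin (fun x => f x + g x).
Proof.
move=> hf hg a x y; rewrite hf hg scalerDr.
by rewrite -!addrA; congr (_ + _); rewrite addrCA.
Qed.
Lemma lin_pair M N P (f : M -> N) (g : M -> P) : lin f -> lin g -> lin (fun x => (f x, g x) : N * P).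
Proof. by move=> hf hg a x y; rewrite hf hg. Qed.
Lemma lin_fst M N : lin (fun x : M * N => x.1).
Proof. by []. Qed.
Lemma lin_snd M N : lin (fun x : M * N => x.2).
Proof. by []. Qed.
Lemma pairD M N (x1 x2 : M) (y1 y2 : N) : (x1, y1) + (x2, y2) = (x1 + x2, y1 + y2).
Proof. by []. Qed.
Lemma pairZ M N a (x : M) (y : N) : a *: (x, y) = (a *: x, a *: y).
Proof. by []. Qed.
Lemma pair0 M N : (0, 0) = 0 :> M * N.
Proof. by []. Qed.
Lemma lin_inl M N : lin (fun x : M => (x, 0) : M * N).
Proof. by move=> a x y; rewrite pairZ pairD scaler0 addr0. Qed.
Lemma lin_inr M N : lin (fun x : N => (0, x) : M * N).
Proof. by move=> a x y; rewrite pairZ pairD scaler0 addr0. Qed.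

Definition span M (s : seq M) (x : M) :=
  exists c : 'I_(size s) -> A, x = \sum_(i < size s) c i *: s`_i.

Lemma span0 M (s : seq M) : span s 0.
Proof. by exists (fun _ => 0); rewrite big1 // => i _; rewrite scale0r. Qed.
Lemma spanD M (s : seq M) x y : span s x -> span s y -> span s (x + y).
Proof.
move=> [c1 ->] [c2 ->]; exists (fun i => c1 i + c2 i).
by rewrite -big_split /=; apply: eq_bigr => i _; rewrite scalerDl.
Qed.
Lemma spanZ M (s : seq M) a x : span s x -> span s (a *: x).
Proof.
move=> [c ->]; exists (fun i => a * c i).
by rewrite scaler_sumr; apply: eq_bigr => i _; rewrite scalerA.
Qed.
Lemma span_nth M (s : seq M) i : (i < size s)%N -> span s s`_i.
Proof.
move=> hi; exists (fun j => if (j : nat) == i then 1 else 0).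
rewrite (bigD1 (Ordinal hi)) //= eqxx scale1r big1 ?addr0 // => j hj.
have -> : ((j : nat) == i) = false by apply/negbTE; apply: contra hj => /eqP e; apply/eqP/val_inj.
by rewrite scale0r.
Qed.
Lemma span_lin M N (s : seq M) (t : seq N) (f : M -> N) x :
  lin f -> (forall i, (i < size s)%N -> span t (f s`_i)) -> span s x -> span t (f x).
Proof.
move=> hf hs [c ->]; rewrite (lin_sum hf).
apply: (big_ind (span t)); [exact: span0| exact: spanD|] => i _.
rewrite (linZ hf); apply: spanZ; exact: hs.
Qed.

Lemma fin_gen_surj M N (f : M -> N) : lin f -> fin_gen M ->
  (forall y, exists x, f x = y) -> fin_gen N.
Proof.
move=> hf [s hs] hsurj; exists (map f s) => y.
have [x <-] := hsurj y.
apply: (span_lin (s := s)) => //.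
move=> i hi; rewrite -(nth_map 0 0) //; first by apply: span_nth; rewrite size_map.
Qed.

Lemma fin_gen_prod M N : fin_gen M -> fin_gen N -> fin_gen (M * N)%type.
Proof.
move=> [s hs] [t ht].
set u := map (fun x : M => (x, 0) : M * N) s ++ map (fun y : N => (0, y) : M * N) t.
exists u => -[x y].
have -> : (x, y) = (x, 0) + (0, y) :> M * N by rewrite pairD addr0 add0r.
apply: spanD.
  apply: (span_lin (s := s) (f := fun x : M => (x, 0) : M * N)) => //; first exact: lin_inl.
  move=> i hi; rewrite -(nth_map 0 0 (fun x : M => (x, 0) : M * N)) //.
  have -> : (map (fun x : M => (x, 0) : M * N) s)`_i = u`_i by rewrite nth_cat size_map hi.
  by apply: span_nth; rewrite size_cat size_map (leq_trans hi) ?leq_addr.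
apply: (span_lin (s := t) (f := fun y : N => (0, y) : M * N)) => //; first exact: lin_inr.
move=> i hi; rewrite -(nth_map 0 0 (fun y : N => (0, y) : M * N)) //.
have -> : (map (fun y : N => (0, y) : M * N) t)`_i = u`_(size s + i) by rewrite nth_cat size_map ltnNge leq_addr /= addKn.
by apply: span_nth; rewrite size_cat !size_map ltn_add2l.
Qed.

End Lin.

Section Cat.
Variable A : nzRingType.
Local Notation fg := (fgmod A).

Definition psum (X Y : fg) : fg := @FGMod A (X * Y)%type (fin_gen_prod (mfg X) (mfg Y)).

Lemma lin_opp (M N : lmodType A) (f : M -> N) : lin f -> lin (fun x => - f x).
Proof. by move=> h a x y; rewrite h opprD scalerN. Qed.

Definition imsub (K X : lmodType A) (g : K -> X) (hg : lin g) : submod X.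
Proof.
refine (@Submod A X (fun y => exists k, g k = y) _ _ _).
- by exists 0; rewrite (lin0 hg).
- by move=> x y [k1 <-] [k2 <-]; exists (k1 + k2); rewrite (linD hg).
- by move=> a x [k <-]; exists (a *: k); rewrite (linZ hg).
Defined.

Definition fullsub (X : lmodType A) : submod X.
Proof. by refine (@Submod A X (fun _ => True) _ _ _). Defined.

Lemma mkq_surj (X : lmodType A) (S : submod X) (q : quot S) : exists x, mkq S x = q.
Proof. by exists (val q); rewrite qvalK. Qed.

Definition qfg (X : fg) (S : submod X) : fg :=
  @FGMod A (quot S) (fin_gen_surj (@mkq_lin A X S) (mfg X) (@mkq_surj X S)).

Definition zfg (X : fg) : fg := qfg (fullsub X).

Lemma zfg_zero X : is_zero_mod (zfg X).
Proof. move=> q; have [x <-] := @mkq_surj X (fullsub X) q; by apply/mkq_eq0. Qed.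

Lemma qlift (X W : lmodType A) (S : submod X) (h : X -> W) :
  lin h -> (forall x, S x -> h x = 0) ->
  exists h' : quot S -> W, lin h' /\ forall x, h' (mkq S x) = h x.
Proof.
move=> hl hk.
have E x : h (val (mkq S x)) = h x.
  apply/eqP; rewrite -subr_eq0 -(linB hl); apply/eqP; apply: hk; exact: val_mkq.
exists (fun q => h (val q)); split => //.
move=> a q q'; have [x <-] := mkq_surj q; have [y <-] := mkq_surj q'.
by rewrite mkqZ mkqD !E hl.
Qed.

Lemma iso_refl (X : fg) : mod_iso X X.
Proof. by exists id, id. Qed.
Lemma iso_sym (X Y : fg) : mod_iso X Y -> mod_iso Y X.
Proof. by move=> [f [g [hf hg h1 h2]]]; exists g, f. Qed.
Lemma iso_trans (X Y Z : fg) : mod_iso X Y -> mod_iso Y Z -> mod_iso X Z.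
Proof.
move=> [f [g [hf hg h1 h2]]] [f' [g' [hf' hg' h1' h2']]].
exists (f' \o f), (g \o g'); split; try exact: lin_comp.
- by move=> x /=; rewrite h1' h1.
- by move=> x /=; rewrite h2 h2'.
Qed.
Lemma summand_refl (X : fg) : summand X X.
Proof. by exists id, id. Qed.
Lemma summand_trans (X Y Z : fg) : summand X Y -> summand Y Z -> summand X Z.
Proof.
move=> [i [p [hi hp h]]] [j [q [hj hq h']]].
exists (j \o i), (p \o q); split; try exact: lin_comp.
by move=> x /=; rewrite h' h.
Qed.
Lemma iso_summand (X Y : fg) : mod_iso X Y -> summand X Y.
Proof. by move=> [f [g [hf hg h1 h2]]]; exists f, g. Qed.

Lemma psum_biprod (Y Z : fg) : biprod (psum Y Z) Y Z.
Proof.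
exists (fun y : Y => (y, 0) : psum Y Z), (fun z : Z => (0, z) : psum Y Z).
exists (fun w : psum Y Z => w.1), (fun w : psum Y Z => w.2).
split; first exact: lin_inl; first exact: lin_inr; first exact: lin_fst; first exact: lin_snd.
by split => // -[y z]; rewrite pairD addr0 add0r.
Qed.

Lemma biprod_iso (X Y Z : fg) : biprod X Y Z -> mod_iso X (psum Y Z).
Proof.
move=> [i1 [i2 [p1 [p2 [hi1 hi2 hp1 hp2 [e1 e2 e3 e4 e5]]]]]].
exists (fun x => (p1 x, p2 x) : psum Y Z), (fun w : psum Y Z => i1 w.1 + i2 w.2).
split.
- exact: lin_pair.
- exact: (lin_add (lin_comp (@lin_fst _ Y Z) hi1) (lin_comp (@lin_snd _ Y Z) hi2)).
- by [].
- move=> [y z] /=; by rewrite (linD hp1) (linD hp2) e1 e2 e3 e4 addr0 add0r.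
Qed.

Lemma iso_biprod (X X' Y Z : fg) : mod_iso X X' -> biprod X Y Z -> biprod X' Y Z.
Proof.
move=> [f [g [hf hg h1 h2]]] [i1 [i2 [p1 [p2 [hi1 hi2 hp1 hp2 [e1 e2 e3 e4 e5]]]]]].
exists (f \o i1), (f \o i2), (p1 \o g), (p2 \o g).
split; try exact: lin_comp.
split => /=.
- by move=> y; rewrite h1.
- by move=> y; rewrite h1.
- by move=> y; rewrite h1.
- by move=> y; rewrite h1.
- by move=> x; rewrite -(linD hf) e5 h2.
Qed.

Lemma biprod_psum_iso (X Y Z : fg) : mod_iso X (psum Y Z) -> biprod X Y Z.
Proof. by move=> h; apply: (iso_biprod (iso_sym h)); apply: psum_biprod. Qed.

Lemma psum_iso (Y Y' Z Z' : fg) : mod_iso Y Y' -> mod_iso Z Z' -> mod_iso (psum Y Z) (psum Y' Z').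
Proof.
move=> [f [g [hf hg h1 h2]]] [f' [g' [hf' hg' h1' h2']]].
exists (fun w : psum Y Z => (f w.1, f' w.2) : psum Y' Z').
exists (fun w : psum Y' Z' => (g w.1, g' w.2) : psum Y Z).
split.
- exact: (lin_pair (lin_comp (@lin_fst _ Y Z) hf) (lin_comp (@lin_snd _ Y Z) hf')).
- exact: (lin_pair (lin_comp (@lin_fst _ Y' Z') hg) (lin_comp (@lin_snd _ Y' Z') hg')).
- by move=> [y z] /=; rewrite h1 h1'.
- by move=> [y z] /=; rewrite h2 h2'.
Qed.

Lemma psum_summand (Y Y' Z Z' : fg) : summand Y Y' -> summand Z Z' -> summand (psum Y Z) (psum Y' Z').
Proof.
move=> [f [g [hf hg h1]]] [f' [g' [hf' hg' h1']]].
exists (fun w : psum Y Z => (f w.1, f' w.2) : psum Y' Z').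
exists (fun w : psum Y' Z' => (g w.1, g' w.2) : psum Y Z).
split.
- exact: (lin_pair (lin_comp (@lin_fst _ Y Z) hf) (lin_comp (@lin_snd _ Y Z) hf')).
- exact: (lin_pair (lin_comp (@lin_fst _ Y' Z') hg) (lin_comp (@lin_snd _ Y' Z') hg')).
- by move=> [y z] /=; rewrite h1 h1'.
Qed.

Lemma psum_assoc (X Y Z : fg) : mod_iso (psum (psum X Y) Z) (psum X (psum Y Z)).
Proof.
exists (fun w : psum (psum X Y) Z => (w.1.1, (w.1.2, w.2)) : psum X (psum Y Z)).
exists (fun w : psum X (psum Y Z) => ((w.1, w.2.1), w.2.2) : psum (psum X Y) Z).
by split => // [[[x y] z]|[x [y z]]].
Qed.

Lemma psum_zero_l (Y Z : fg) : is_zero_mod Y -> mod_iso (psum Y Z) Z.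
Proof.
move=> hY; exists (fun w : psum Y Z => w.2), (fun z : Z => (0, z) : psum Y Z).
split.
- exact: lin_snd.
- exact: lin_inr.
- by move=> [y z] /=; rewrite (hY y).
- by [].
Qed.

End Cat.

Section Cat2.
Variable A : nzRingType.
Local Notation fg := (fgmod A).
Implicit Types S : cls A.

Lemma zero_iso (X Y : fg) : is_zero_mod X -> mod_iso X Y -> is_zero_mod Y.
Proof.
move=> hX [f [g [hf hg h1 h2]]] y.
by rewrite -(h2 y) (hX (g y)) (lin0 hf).
Qed.

Lemma fsum_iso S (X Y : fg) : fsum S X -> mod_iso X Y -> fsum S Y.
Proof.
move=> hX; elim: hX Y => [X0 hz|X0 Y0 Z0 hY hZ _ hb] Y hi.
  by apply: fsum0; apply: zero_iso hi.
by apply: (fsumS hY hZ); apply: iso_biprod hi hb.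
Qed.

Lemma fsum_psum S (Y Z : fg) : fsum S Y -> fsum S Z -> fsum S (psum Y Z).
Proof.
move=> hY hZ; elim: hY => [Y0 hz|Y0 Y1 Y2 h1 h2 IH hb].
  by apply: (fsum_iso hZ); apply: iso_sym; apply: psum_zero_l.
apply: (fsumS h1 IH); apply: biprod_psum_iso.
apply: iso_trans (psum_iso (biprod_iso hb) (iso_refl Z)) _.
exact: psum_assoc.
Qed.

Lemma fsum_biprod S (X Y Z : fg) : fsum S Y -> fsum S Z -> biprod X Y Z -> fsum S X.
Proof.
move=> hY hZ hb; apply: (fsum_iso (fsum_psum hY hZ)); apply: iso_sym.
exact: biprod_iso.
Qed.

Lemma fsum_mono S S' (X : fg) : (forall Y, S Y -> S' Y) -> fsum S X -> fsum S' X.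
Proof.
move=> hS; elim => [X0 hz|X0 Y0 Z0 hY hZ IH hb]; first exact: fsum0.
by apply: (fsumS (hS _ hY) IH hb).
Qed.

Lemma add_zero S (X : fg) : is_zero_mod X -> Defs.add S X.
Proof. by move=> hz; exists X; split; [exact: fsum0| exact: summand_refl]. Qed.

Lemma add_summand S (X Y : fg) : summand X Y -> Defs.add S Y -> Defs.add S X.
Proof. by move=> hs [Z [hZ hs']]; exists Z; split => //; apply: summand_trans hs hs'. Qed.

Lemma add_iso S (X Y : fg) : mod_iso X Y -> Defs.add S X -> Defs.add S Y.
Proof. by move=> hi; apply: add_summand; apply: iso_summand; apply: iso_sym. Qed.

Lemma biprod_zero_r (X Z : fg) : is_zero_mod Z -> biprod X X Z.
Proof.
move=> hz; exists id, (fun _ => 0), id, (fun _ => 0); split.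
- exact: lin_id.
- exact: lin_cst0.
- exact: lin_id.
- exact: lin_cst0.
- split => //=.
  by move=> x; rewrite addr0.
Qed.

Lemma add_sub S (X : fg) : S X -> Defs.add S X.
Proof.
move=> hX; exists X; split; last exact: summand_refl.
apply: (fsumS (Z := zfg X) hX); first by apply: fsum0; apply: zfg_zero.
by apply: biprod_zero_r; apply: zfg_zero.
Qed.

Lemma add_mono S S' (X : fg) : (forall Y, S Y -> S' Y) -> Defs.add S X -> Defs.add S' X.
Proof. by move=> hS [Y [hY hs]]; exists Y; split => //; apply: fsum_mono hY. Qed.

Lemma fsum_add S (X : fg) : fsum (Defs.add S) X -> Defs.add S X.
Proof.
elim => [X0 hz|X0 Y0 Z0 [Y' [hY' sY]] hZ [Z' [hZ' sZ]] hb]; first exact: add_zero.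
exists (psum Y' Z'); split; first exact: fsum_psum.
apply: summand_trans (psum_summand sY sZ).
by apply: iso_summand; apply: biprod_iso.
Qed.

Lemma add_idem S (X : fg) : Defs.add (Defs.add S) X -> Defs.add S X.
Proof. by move=> [Y [hY hs]]; apply: add_summand hs _; apply: fsum_add. Qed.

Definition ext S1 S2 : cls A := fun X => exists Y Z, [/\ S1 Y, S2 Z & short_exact Y X Z].

Lemma bulletE S1 S2 (X : fg) : bullet S1 S2 X = Defs.add (ext S1 S2) X.
Proof. by []. Qed.

Lemma ext_mono S1 S2 S1' S2' (X : fg) : (forall Y, S1 Y -> S1' Y) -> (forall Y, S2 Y -> S2' Y) ->
  ext S1 S2 X -> ext S1' S2' X.
Proof. by move=> h1 h2 [Y [Z [hY hZ he]]]; exists Y, Z; split; auto. Qed.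

Lemma bullet_mono S1 S2 S1' S2' (X : fg) : (forall Y, S1 Y -> S1' Y) -> (forall Y, S2 Y -> S2' Y) ->
  bullet S1 S2 X -> bullet S1' S2' X.
Proof. by move=> h1 h2; apply: add_mono => Y; apply: ext_mono. Qed.

Lemma ses_left (X Z : fg) : is_zero_mod Z -> short_exact X X Z.
Proof.
move=> hz; exists id, (fun _ => 0); split.
- exact: lin_id.
- exact: lin_cst0.
- by move=> x y.
- by move=> t; exists 0; rewrite (hz t).
- by move=> x; split => // _; exists x.
Qed.

Lemma ses_right (X Z : fg) : is_zero_mod Z -> short_exact Z X X.
Proof.
move=> hz; exists (fun _ => 0), id; split.
- exact: lin_cst0.
- exact: lin_id.
- by move=> x y _; rewrite (hz x) (hz y).
- by move=> t; exists t.
- by move=> x; split => [->|[t <-]] //; exists 0.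
Qed.

Lemma bullet_l S1 S2 (X Z : fg) : is_zero_mod Z -> S2 Z -> S1 X -> bullet S1 S2 X.
Proof. by move=> hz hZ hX; apply: add_sub; exists X, Z; split => //; apply: ses_left. Qed.

Lemma bullet_r S1 S2 (X Z : fg) : is_zero_mod Z -> S1 Z -> S2 X -> bullet S1 S2 X.
Proof. by move=> hz hZ hX; apply: add_sub; exists Z, X; split => //; apply: ses_right. Qed.

End Cat2.

Section Cat3.
Variable A : nzRingType.
Local Notation fg := (fgmod A).
Implicit Types S : cls A.

Lemma ses_comp0 (X Y Z : fg) (f : X -> Y) (g : Y -> Z) :
  (forall y, g y = 0 <-> exists t, f t = y) -> forall t, g (f t) = 0.
Proof. by move=> h t; apply/h; exists t. Qed.

Lemma inj_lin0 (X Y : fg) (f : X -> Y) : lin f -> injective f -> forall x, f x = 0 -> x = 0.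
Proof. by move=> hf hi x e; apply: hi; rewrite e (lin0 hf). Qed.

Lemma pair_eq0 (M N : lmodType A) (x : M) (y : N) : (x, y) = 0 -> x = 0 /\ y = 0.
Proof. by rewrite -pair0 => -[-> ->]. Qed.

Lemma ses_sum (A1 E1 B1 A2 E2 B2 M : fg) :
  short_exact A1 E1 B1 -> short_exact A2 E2 B2 -> biprod M E1 E2 ->
  short_exact (psum A1 A2) M (psum B1 B2).
Proof.
move=> [f1 [g1 [hf1 hg1 in1 su1 ex1]]] [f2 [g2 [hf2 hg2 in2 su2 ex2]]].
move=> [j1 [j2 [q1 [q2 [hj1 hj2 hq1 hq2 [e1 e2 e3 e4 e5]]]]]].
have Q1 x y : q1 (j1 x + j2 y) = x by rewrite (linD hq1) e1 e3 addr0.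
have Q2 x y : q2 (j1 x + j2 y) = y by rewrite (linD hq2) e2 e4 add0r.
exists (fun w : psum A1 A2 => j1 (f1 w.1) + j2 (f2 w.2)).
exists (fun m => (g1 (q1 m), g2 (q2 m)) : psum B1 B2).
split.
- exact: (lin_add (lin_comp (lin_comp (@lin_fst _ A1 A2) hf1) hj1)
                  (lin_comp (lin_comp (@lin_snd _ A1 A2) hf2) hj2)).
- exact: (lin_pair (lin_comp hq1 hg1) (lin_comp hq2 hg2)).
- move=> [a1 a2] [b1 b2] /= e.
  have := congr1 q1 e; rewrite !Q1 => /in1 ->.
  by have := congr1 q2 e; rewrite !Q2 => /in2 ->.
- move=> [t1 t2]; have [x1 <-] := su1 t1; have [x2 <-] := su2 t2.
  by exists (j1 x1 + j2 x2); rewrite Q1 Q2.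
- move=> m; split.
    move=> /pair_eq0 [/ex1 [a1 ea1] /ex2 [a2 ea2]].
    by exists (a1, a2); rewrite /= ea1 ea2 e5.
  move=> [[a1 a2] <-] /=; rewrite Q1 Q2 (ses_comp0 ex1) (ses_comp0 ex2).
  by [].
Qed.

Lemma fsum_ext S1 S2 (M : fg) : fsum (ext S1 S2) M -> ext (fsum S1) (fsum S2) M.
Proof.
elim => [X hz|X E Z [A1 [B1 [hA1 hB1 s1]]] _ [A2 [B2 [hA2 hB2 s2]]] hb].
  exists X, X; split; try exact: fsum0.
  exists id, (fun _ => 0); split.
  - exact: lin_id.
  - exact: lin_cst0.
  - by move=> x y.
  - by move=> t; exists t; rewrite (hz t).
  - by move=> x; split => // _; exists x.
exists (psum A1 A2), (psum B1 B2); split.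
- exact: (fsumS hA1 hA2 (psum_biprod A1 A2)).
- exact: (fsumS hB1 hB2 (psum_biprod B1 B2)).
- exact: ses_sum s1 s2 hb.
Qed.


Lemma pairB (M N : lmodType A) (x1 x2 : M) (y1 y2 : N) :
  (x1, y1) - (x2, y2) = (x1 - x2, y1 - y2) :> M * N.
Proof. by []. Qed.

Lemma pushout (M Y N M' : fg) : short_exact M Y N -> summand M M' ->
  exists Y' : fg, short_exact M' Y' N /\ summand Y Y'.
Proof.
move=> [f [g [hf hg inf sug exg]]] [i [p [hi hp pi]]].
pose P := psum Y M'.
pose phi := fun m : M => (f m, - i m) : P.
have hphi : lin phi := lin_pair hf (lin_opp hi).
pose S := imsub hphi.
have [g' [hg' Eg']] : exists g' : quot S -> N, lin g' /\ forall x : P, g' (mkq S x) = g x.1.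
  apply: qlift; first exact: (lin_comp (@lin_fst _ Y M') hg).
  by move=> x [m <-]; exact: ses_comp0 exg m.
have [r [hr Er]] : exists r : quot S -> Y, lin r /\ forall x, r (mkq S x) = x.1 + f (p x.2).
  apply: qlift.
    exact: (lin_add (@lin_fst _ Y M') (lin_comp (lin_comp (@lin_snd _ Y M') hp) hf)).
  by move=> x [m <-] /=; rewrite (linN hp) pi (linN hf) subrr.
exists (qfg S); split.
- exists (fun m' => mkq S ((0, m') : P)), g'; split.
  + exact: (lin_comp (@lin_inr _ Y M') (mkq_lin S)).
  + exact: hg'.
  + move=> a b /mkq_eq [m /= e].
    have e' : ((f m, - i m) : P) = (0 - 0, a - b) by rewrite -pairB -e.
    case: e' => e1 e2.
    have m0 : m = 0 by apply: (inj_lin0 hf inf); rewrite e1 subrr.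
    by apply/eqP; rewrite -subr_eq0 -e2 m0 (lin0 hi) oppr0.
  + by move=> t; have [y <-] := sug t; exists (mkq S ((y, 0) : P)); rewrite Eg'.
  + move=> q; have [[y m'] <-] := mkq_surj q; rewrite Eg' /=; split.
      move/exg => [m em]; exists (m' + i m); apply/mkq_eq.
      exists (- m); rewrite pairB /phi (linN hf) (linN hi) opprK em.
      by rewrite sub0r addrC addKr.
    move=> [t /mkq_eq [k e]].
    have e' : ((f k, - i k) : P) = (0 - y, t - m') by rewrite -pairB -e.
    case: e' => e1 _.
    have -> : y = f (- k) by rewrite (linN hf) e1 sub0r opprK.
    exact: ses_comp0 exg _.
- exists (fun y => mkq S ((y, 0) : P)), r; split.
  + exact: (lin_comp (@lin_inl _ Y M') (mkq_lin S)).
  + exact: hr.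
  + by move=> y; rewrite Er /= (lin0 hp) (lin0 hf) addr0.
Qed.

Lemma compose (A0 M B Y N : fg) : short_exact A0 M B -> short_exact M Y N ->
  exists Q : fg, short_exact A0 Y Q /\ short_exact B Q N.
Proof.
move=> [a [b [ha hb ina sub exb]]] [f [g [hf hg inf sug exg]]].
have hfa : lin (f \o a) := lin_comp ha hf.
pose S := imsub hfa.
have [sec hsec] := @choice B M (fun t x => b x = t) sub.
have key m : b m = 0 -> S (f m) by move=> /exb [t <-]; exists t.
exists (qfg S); split.
- exists (f \o a), (mkq S); split.
  + exact: hfa.
  + exact: mkq_lin.
  + by move=> x y /= /inf /ina.
  + exact: mkq_surj.
  + by move=> y; apply: (mkq_eq0 S y).
- have [v [hv Ev]] : exists v : quot S -> N, lin v /\ forall y, v (mkq S y) = g y.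
    apply: qlift => //.
    by move=> x [t <-]; exact: ses_comp0 exg (a t).
  exists (fun t => mkq S (f (sec t))), v; split.
  + move=> r t t'; rewrite mkqZ mkqD; apply/mkq_eq.
    rewrite -(linZ hf) -(linD hf) -(linB hf); apply: key.
    by rewrite (linB hb) (linD hb) (linZ hb) !hsec subrr.
  + exact: hv.
  + move=> t t' /mkq_eq; rewrite -(linB hf) => -[k /= e].
    have e2 := inf _ _ e.
    apply/eqP; rewrite -subr_eq0 -(hsec t) -(hsec t') -(linB hb) -e2.
    by rewrite (ses_comp0 exb).
  + by move=> t; have [y <-] := sug t; exists (mkq S y); exact: Ev.
  + move=> q; have [y <-] := mkq_surj q; rewrite Ev; split.
      move/exg => [m <-]; exists (b m); apply/mkq_eq; rewrite -(linB hf); apply: key.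
      by rewrite (linB hb) hsec subrr.
    move=> [t e]; rewrite -Ev -e Ev; exact: ses_comp0 exg _.
Qed.

End Cat3.

Section Cat4.
Variable A : nzRingType.
Local Notation fg := (fgmod A).
Implicit Types S : cls A.

Lemma assoc_incl S1 S2 S3 (X : fg) :
  (forall Y, fsum S1 Y -> S1 Y) -> (forall Y, fsum S2 Y -> S2 Y) ->
  bullet (bullet S1 S2) S3 X -> bullet S1 (bullet S2 S3) X.
Proof.
move=> h1 h2 hX; rewrite bulletE; apply: add_idem; move: hX; rewrite bulletE.
apply: add_mono => Y [M [N [[M' [hM' sM]] hN se]]].
have [Y' [se' sY]] := pushout se sM.
have [A0 [B [hA0 hB se2]]] := fsum_ext hM'.
have [Q [sA sB]] := compose se2 se'.
apply: add_summand sY _; apply: add_sub.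
exists A0, Q; split; first exact: h1.
  by apply: add_sub; exists B, N; split => //; apply: h2.
exact: sA.
Qed.

Lemma brack_addE (T : fg) n : (0 < n)%N -> exists P, brack T n = Defs.add P.
Proof. by case: n => [|[|n]] //= _; eexists. Qed.

Lemma brack_fsum (T : fg) n (X : fg) : (0 < n)%N -> fsum (brack T n) X -> brack T n X.
Proof. move=> h; have [P e] := brack_addE T h; rewrite e; exact: fsum_add. Qed.

Lemma brackS (T : fg) n : (0 < n)%N -> brack T n.+1 = bullet (Defs.add (fun X => mod_iso X T)) (brack T n).
Proof. by case: n. Qed.

Lemma brack_mul (T : fg) a b (X : fg) : (0 < a)%N -> (0 < b)%N ->
  bullet (brack T a) (brack T b) X -> brack T (a + b) X.
Proof.
elim: a X => [|a IH] X // _ hb.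
case: (posnP a) => [->|ha].
  by rewrite add1n (brackS T hb).
rewrite brackS // addSn brackS ?addn_gt0 ?ha // => hX.
have := assoc_incl (fun Y => @fsum_add _ _ Y) (fun Y => brack_fsum ha) hX.
by apply: bullet_mono => // Y; apply: IH.
Qed.

Lemma brack_mono (T T' : fg) n (X : fg) : summand T T' -> (0 < n)%N ->
  brack T n X -> brack T' n X.
Proof.
move=> hs; elim: n X => [|n IH] X // _.
have base Y : Defs.add (fun X => mod_iso X T) Y -> Defs.add (fun X => mod_iso X T') Y.
  move=> hY; apply: add_idem; move: hY; apply: add_mono => Z hZ.
  apply: (@add_summand _ (fun X => mod_iso X T') Z T').
    exact: summand_trans (iso_summand hZ) hs.
  by apply: add_sub; exact: iso_refl.
case: (posnP n) => [->|hn]; first exact: base.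
rewrite !brackS //; apply: bullet_mono; first exact: base.
by move=> Y; apply: IH.
Qed.

Lemma bullets_zero (C : nat -> cls A) (Z : fg) j : is_zero_mod Z -> C 0%N Z -> bullets C j Z.
Proof. by move=> hz h0; case: j => // j; apply: add_zero. Qed.

Lemma sub_bullets (C : nat -> cls A) k i :
  (forall i, (i < k)%N -> subcategory (C i)) -> (i < k)%N ->
  forall j, (i <= j)%N -> (j < k)%N -> forall X, C i X -> bullets C j X.
Proof.
move=> hC hik; elim => [|j IH] hij hjk X hX.
  by move: hij; rewrite leqn0 => /eqP ei; rewrite ei in hX.
have [Z0 [hz hZ0]] : exists Z, is_zero_mod Z /\ C 0%N Z.
  by case: (hC 0%N (leq_ltn_trans (leq0n _) hik)).
rewrite leq_eqVlt in hij; case/orP: hij => [/eqP ei|hij]; first subst i.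
  by apply: (bullet_r (Z := Z0)) => //; apply: bullets_zero.
have [Z1 [hz1 hZ1]] : exists Z, is_zero_mod Z /\ C j.+1 Z by case: (hC j.+1 hjk).
apply: (bullet_l (Z := Z1)) => //; apply: IH => //; exact: ltnW.
Qed.

End Cat4.

Close Scope ring_scope.

Section Ed.
Variable A : nzRingType.
Local Notation fg := (fgmod A).

Lemma ed_predP (C : cls A) m : ed_pred C m <-> exists T : fg, forall X, C X -> brack T m.+1 X.
Proof. by split => [/asboolP|h] //; apply/asboolP. Qed.

Lemma ed_some (C : cls A) m : ed C = Some m -> ed_pred C m.
Proof. rewrite /ed; case: pselect => // h [<-]; by case: ex_minnP. Qed.

Lemma ed_le (C : cls A) m : ed_pred C m -> exists m', ed C = Some m' /\ (m' <= m)%N.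
Proof.
move=> hm; rewrite /ed; case: pselect => [h|nh]; last by exfalso; apply: nh; exists m.
exists (ex_minn h); split => //; case: ex_minnP => m0 _ hmin; exact: hmin.
Qed.

Lemma summand_psum_l (X Y : fg) : summand X (psum X Y).
Proof.
exists (fun x : X => (x, 0%R) : psum X Y), (fun w : psum X Y => w.1); split.
- exact: lin_inl.
- exact: lin_fst.
- by [].
Qed.
Lemma summand_psum_r (X Y : fg) : summand Y (psum X Y).
Proof.
exists (fun y : Y => (0%R, y) : psum X Y), (fun w : psum X Y => w.2); split.
- exact: lin_inr.
- exact: lin_snd.
- by [].
Qed.
End Ed.

Lemma oaddA : associative oadd.
Proof. by move=> [a|] [b|] [c|] //=; rewrite addnA. Qed.
Lemma oaddC : commutative oadd.
Proof. by move=> [a|] [b|] //=; rewrite addnC. Qed.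
Lemma oadd0 : left_id (Some 0%N) oadd.
Proof. by move=> [a|]. Qed.
HB.instance Definition _ := Monoid.isComLaw.Build (option nat) (Some 0%N) oadd oaddA oaddC oadd0.

Lemma big_oadd_none k (F : nat -> option nat) j : (j < k)%N -> F j = None ->
  \big[oadd/Some 0%N]_(i < k) F i = None.
Proof.
elim: k => // k IH hj hF; rewrite big_ord_recr /=.
rewrite ltnS leq_eqVlt in hj; case/orP: hj => [/eqP <-|hj].
  by rewrite hF; case: (\big[_/_]_(_ < _) _).
by rewrite IH.
Qed.

Lemma big_oadd_some k (F : nat -> option nat) (n : nat -> nat) :
  (forall j, (j < k)%N -> F j = Some (n j)) ->
  \big[oadd/Some 0%N]_(i < k) F i = Some (\sum_(i < k) n i).
Proof.
elim: k => [|k IH] h; first by rewrite !big_ord0.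
rewrite big_ord_recr [in RHS]big_ord_recr /= IH; last by move=> j hj; apply: h; exact: ltnW.
by rewrite h.
Qed.

Lemma sumS k (n : nat -> nat) : \sum_(i < k) (n i).+1 = (\sum_(i < k) n i + k)%N.
Proof.
elim: k => [|k IH]; first by rewrite !big_ord0.
by rewrite !big_ord_recr /= IH !addnS -!addnA (addnC k).
Qed.

Theorem corollary2p9 (R : comNzRingType) (A : algType R)
  (hR : artinian R) (hA : fin_gen A)
  (k : nat) (hk : (1 <= k)%N) (C : nat -> cls A)
  (hC : forall i, (i < k)%N -> subcategory (C i)) :
  (forall i, (i < k)%N -> oleq (ed (C i)) (ed (bullets C k.-1)))
  /\ oleq (ed (bullets C k.-1))
          (oadd (\big[oadd/Some 0%N]_(i < k) ed (C i)) (Some k.-1)).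
Proof.
have hk1 : (k.-1 < k)%N by rewrite prednK.
split.
  move=> i hi.
  have hik : (i <= k.-1)%N by rewrite -ltnS prednK.
  have hsub := sub_bullets hC hi hik hk1.
  case e: (ed (bullets C k.-1)) => [m|]; last by case: (ed (C i)).
  have [T hT] := (ed_predP _ _).1 (ed_some e).
  have [m' [-> hm']] := @ed_le _ (C i) m ((ed_predP _ _).2 (ex_intro _ T (fun X hX => hT X (hsub X hX)))).
  exact: hm'.
case: (pselect (exists j, (j < k)%N /\ ed (C j) = None)) => [[j [hj hN]]|hall].
  by rewrite (@big_oadd_none k (fun i => ed (C i)) j hj hN); case: ed.
pose n j := odflt 0%N (ed (C j)).
have hn j : (j < k)%N -> ed (C j) = Some (n j).
  move=> hj; rewrite /n; case e: (ed (C j)) => [m|] //.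
  by exfalso; apply: hall; exists j.
rewrite (@big_oadd_some k (fun i => ed (C i)) n hn) /=.
have hT j : (j < k)%N -> exists T, forall X, C j X -> brack T (n j).+1 X.
  by move=> hj; apply/ed_predP; apply: ed_some; exact: hn.
have pos j : (0 < \sum_(i < j.+1) (n i).+1)%N by rewrite big_ord_recr /= addnS.
have up j : (j < k)%N -> exists T, forall X, bullets C j X -> brack T (\sum_(i < j.+1) (n i).+1) X.
  elim: j => [|j IH] hj.
    have [T hT0] := hT 0%N hj; exists T => X hX; rewrite big_ord1; exact: hT0.
  have [T1 h1] := IH (ltnW hj); have [T2 h2] := hT j.+1 hj.
  exists (psum T1 T2) => X hX.
  rewrite big_ord_recr /=; apply: brack_mul; [exact: pos| by []|].
  apply: (bullet_mono _ _ hX) => Y hY.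
    apply: (brack_mono (T := T1)); [exact: summand_psum_l| exact: pos| exact: h1].
  apply: (brack_mono (T := T2)); [exact: summand_psum_r| by []| exact: h2].
have [T hT'] := up k.-1 hk1.
rewrite (prednK hk) sumS in hT'.
have e : (\sum_(i < k) n i + k.-1).+1 = (\sum_(i < k) n i + k)%N by rewrite -addnS prednK.
have [m' [-> hm']] := @ed_le _ (bullets C k.-1) (\sum_(i < k) n i + k.-1)%N
   ((ed_predP _ _).2 (ex_intro _ T (fun X hX => eq_ind_r (fun z => brack T z X) (hT' X hX) e))).
exact: hm'.
Qed.
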